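(* Let $w\in(1,\infty)$ and $\delta\in(0,1)$. Define the CI reporting procedure $\Phi$ by: for input $(S,\mathbf C)$ with $S\subseteq[K]$, $\mathbf C\in\mathrm{ECI}_K$, if $(S,\mathbf C)\in\Sigma(w)$ report $C_i(w\delta|S|/K)$ for $i\in S$, and otherwise report $C_i(\delta|S|/K)$ for $i\in S$. Then for every random selection $\mathcal S$, e-value families $E_1,\dots,E_K$ and true parameter $\boldsymbol\theta$, $$\mathrm{FCR}(\Phi)=\mathbb{E}\left[\frac{\sum_{i\in\mathcal S}\mathbf 1\{\theta_i\notin\Phi(\mathcal S,\mathbf C^{\mathbf E})_i\}}{|\mathcal S|\vee1}\right]\le\delta .$$
   Context: Fix $K$ and parameter spaces $\Theta_1,\dots,\Theta_K$; the probability space carries a random variable that is standard uniform under every parameter. An e-value family for $\Theta_i$ is $(E_i(\theta))_{\theta\in\Theta_i}$ with $E_i(\theta)\ge0$ and $\mathbb{E}[E_i(\theta)]\le1$ whenever $\theta$ is the true value of $\theta_i$; $C^{\mathbf E}_i(\alpha)=\{\theta\in\Theta_i:E_i(\theta)<1/\alpha\}$ ($1/0=\infty$). $\mathrm{ECI}_K$ is the set of tuples $\mathbf C=(C_1,\dots,C_K)$ where each $C_i:[0,1]\to2^{\Theta_i}$ is nonincreasing with $C_i(\alpha)=\bigcup_{\beta>\alpha}C_i(\beta)$ for $\alpha\in[0,1)$ (the possible realizations of such e-CIs). For $\mathbf C\in\mathrm{ECI}_K$ let $t_i(\theta)=\sup\{1/\alpha:\alpha\in[0,1),\theta\notin C_i(\alpha)\}$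 (with $\sup\emptyset=1$). For $S\ne\emptyset,[K]$ let $\gamma(S,\mathbf C)=\sum_{i\in S}\sup_{\theta\in\Theta_i}t_i(\theta)$, $\lambda(S,\mathbf C)=\sum_{i\in[K]\setminus S}\inf_{\theta\in\Theta_i}\big(t_i(\theta)\mathbf 1\{t_i(\theta)>1\}\big)$, and $v(S,\mathbf C)=1+\lambda(S,\mathbf C)/\gamma(S,\mathbf C)$ with $\infty/\infty=0$. $\Sigma(w)=\{(S,\mathbf C): S\ne\emptyset,[K],\ v(S,\mathbf C)\ge w\}$. A random selection $\mathcal S$ is any $2^{[K]}$-valued random variable, and $\Phi$ is applied to $(\mathcal S,\mathbf C^{\mathbf E})$. *)

(* Defs.v *)
From HB Require Import structures.
From mathcomp Require Import all_boot all_order all_algebra.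
From mathcomp Require Import all_classical all_reals all_analysis.
From mathcomp Require Import measurable_realfun.
Set Implicit Arguments. Unset Strict Implicit. Unset Printing Implicit Defensive.
Import Order.TTheory GRing.Theory Num.Theory.
Local Open Scope classical_set_scope.
Local Open Scope ring_scope.

Section EFCR.
Variable R : realType.
Variable K : nat.
Variable Theta : 'I_K -> Type.

Definition inv_lev (a : R) : \bar R := if a == 0 then +oo%E else (a^-1)%:E.

Definition CE (E : forall i, Theta i -> \bar R) : forall i, R -> set (Theta i) :=
  fun i a => [set th | (E i th < inv_lev a)%E].

Definition tfun (C : forall i, R -> set (Theta i)) (i : 'I_K) (th : Theta i) : \bar R :=
  let A := [set x : \bar R | exists a : R,
              [/\ 0 <= a, a < 1, ~ C i a th & x = inv_lev a]] in
  if `[< A !=set0 >] then ereal_sup A else 1%E.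
Arguments tfun C i th : clear implicits.

(* extended division with x/+oo = 0 (in particular oo/oo = 0); used only with y > 0 *)
Definition ediv (x y : \bar R) : \bar R :=
  match y with
  | +oo%E => 0%E
  | -oo%E => 0%E
  | r%:E => match x with
            | s%:E => (s / r)%:E
            | +oo%E => +oo%E
            | -oo%E => -oo%E
            end
  end.

Definition gammaS (S : {set 'I_K}) (C : forall i, R -> set (Theta i)) : \bar R :=
  (\sum_(i in S) ereal_sup ((tfun C i) @` setT))%E.

Definition lambdaS (S : {set 'I_K}) (C : forall i, R -> set (Theta i)) : \bar R :=
  (\sum_(i in ~: S) ereal_inf
     ((fun th => if (1 < tfun C i th)%E then tfun C i th else 0%E) @` setT))%E.

Definition vS (S : {set 'I_K}) (C : forall i, R -> set (Theta i)) : \bar R :=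
  (1 + ediv (lambdaS S C) (gammaS S C))%E.

Definition inSigma (w : R) (S : {set 'I_K}) (C : forall i, R -> set (Theta i)) : Prop :=
  [/\ S != finset.set0, S != finset.setT & (w%:E <= vS S C)%E].

Definition Phi (w delta : R) (S : {set 'I_K}) (C : forall i, R -> set (Theta i))
  (i : 'I_K) : set (Theta i) :=
  C i (if `[< inSigma w S C >] then w * delta * #|S|%:R / K%:R
       else delta * #|S|%:R / K%:R).
Arguments Phi w delta S C i : clear implicits.

Definition FCP (w delta : R) (S : {set 'I_K}) (C : forall i, R -> set (Theta i))
  (theta : forall i, Theta i) : R :=
  (\sum_(i in S) (if `[< ~ Phi w delta S C i (theta i) >] then 1 else 0))
    / (maxn #|S| 1)%:R.

End EFCR.

(* Main.v *)
Require Import Defs.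
From HB Require Import structures.
From mathcomp Require Import all_boot all_order all_algebra.
From mathcomp Require Import all_classical all_reals all_analysis.
From mathcomp Require Import measurable_realfun.
From mathcomp Require Import ring lra.
Import Order.TTheory GRing.Theory Num.Theory.
Local Open Scope classical_set_scope.
Local Open Scope ring_scope.

Section Aux.
Variable R : realType.
Variable K : nat.
Variable Theta : 'I_K -> Type.
Local Open Scope ereal_scope.

Lemma inv_lev_pos (a : R) : (0 < a)%R -> inv_lev a = (a^-1)%:E.
Proof. by move=> a0; rewrite /inv_lev gt_eqF. Qed.

Lemma tfun_ge (Ev : forall i, Theta i -> \bar R) i th :
  Ev i th <= tfun (CE Ev) th.
Proof.
rewrite /tfun /=.
have [e1|e1] := leP (Ev i th) 1%E.
  case: asboolP => [[x [a [a0 a1 hC xE]]]|_]; last by [].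
  apply: (le_trans e1); apply: (@le_trans _ _ (inv_lev a)); last first.
    by apply: ereal_sup_ubound; exists a; split.
  rewrite /inv_lev; case: eqP => [_|/eqP an0]; first exact: leey.
  rewrite lee_fin invf_ge1 ?ltW//; rewrite lt_neqAle eq_sym an0 a0 //.
have Ae : [set x : \bar R | exists a : R,
              [/\ (0 <= a)%R, (a < 1)%R, ~ CE Ev a th & x = inv_lev a]] (Ev i th).
  move: e1; case hE: (Ev i th) => [r||] /=; last by [].
    rewrite lte_fin => r1; have r0 : (0 < r)%R by apply: lt_trans r1.
    exists (r^-1)%R; split; first by rewrite invr_ge0 ltW.
    - by rewrite invf_lt1.
    - by rewrite /CE /= hE inv_lev_pos ?invr_gt0 // invrK ltxx.
    - by rewrite inv_lev_pos ?invr_gt0 // invrK.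
  by exists 0%R; split => //; rewrite /CE /inv_lev /= ?hE eqxx ?ltxx.
case: asboolP => [_|hA]; first exact: ereal_sup_ubound.
by exfalso; apply: hA; exists (Ev i th).
Qed.

Lemma tfun_le (Ev : forall i, Theta i -> \bar R) i th :
  1 < tfun (CE Ev) th -> tfun (CE Ev) th <= Ev i th.
Proof.
rewrite /tfun /=; case: asboolP => [_ _|_]; last by rewrite ltxx.
apply: ge_ereal_sup => x [a [_ _ hC ->]].
by move: hC; rewrite /CE /= => /negP; rewrite -leNgt.
Qed.


Variable theta : forall i, Theta i.

Lemma gamma_ge (Ev : forall i, Theta i -> \bar R) (S : {set 'I_K}) :
  \sum_(i in S) Ev i (theta i) <= gammaS S (CE Ev).
Proof.
rewrite /gammaS; apply: lee_sum => i _.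
apply: (le_trans (tfun_ge Ev i (theta i))); apply: ereal_sup_ubound.
by exists (theta i).
Qed.

Lemma lambda_le (Ev : forall i, Theta i -> \bar R)
  (hnn : forall i th, 0 <= Ev i th) (S : {set 'I_K}) :
  lambdaS S (CE Ev) <= \sum_(i in ~: S) Ev i (theta i).
Proof.
rewrite /lambdaS; apply: lee_sum => i _.
apply: (@le_trans _ _ (if 1 < tfun (CE Ev) (theta i) then tfun (CE Ev) (theta i) else 0)).
  by apply: ereal_inf_lbound; exists (theta i).
by case: ifP => [/tfun_le//|_]; exact: hnn.
Qed.

Lemma sigma_ineq (Ev : forall i, Theta i -> \bar R)
  (hnn : forall i th, 0 <= Ev i th) (S : {set 'I_K}) (w : R) :
  (1 < w)%R -> inSigma w S (CE Ev) ->
  w%:E * \sum_(i in S) Ev i (theta i) <=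
  \sum_(i in S) Ev i (theta i) + \sum_(i in ~: S) Ev i (theta i).
Proof.
move=> w1 [_ _]; rewrite /vS.
have hg := gamma_ge Ev S; have hl := lambda_le Ev hnn S.
have X0 : 0 <= \sum_(i in S) Ev i (theta i) by apply: sume_ge0 => i _; exact: hnn.
have Y0 : 0 <= \sum_(i in ~: S) Ev i (theta i) by apply: sume_ge0 => i _; exact: hnn.
move: hg hl X0 Y0.
case: (gammaS S (CE Ev)) => [r||]; case: (lambdaS S (CE Ev)) => [s||] /=;
  rewrite ?lee_fin; try (by move=> *; exfalso; move: w1; rewrite ltNge; move/negP; apply;
     rewrite -lee_fin; apply: le_trans (_ : _ <= 1 + 0%E) _ => //; rewrite adde0).
- case: (\sum_(i in S) Ev i (theta i)) => [x||] //; case: (\sum_(i in ~: S) Ev i (theta i)) => [y||] //;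
    rewrite ?lee_fin => xr sy x0 y0 hv; rewrite ?lee_fin.
  + have r0 : (0 < r)%R.
      rewrite lt_neqAle (le_trans x0 xr) andbT; apply/negP => /eqP r0.
      by move: hv; rewrite -r0 invr0 mulr0 addr0 leNgt w1.
    move: hv; rewrite -lerBlDl ler_pdivlMr // => hv.
    nra.
  + by rewrite addey // leey.
- move=> _; rewrite leye_eq => /eqP -> + _ _.
  by case: (\sum_(i in S) Ev i (theta i)) => //= *; rewrite addey // leey.
Qed.

Lemma FCP_ge0 (w delta : R) S C : (0 <= FCP w delta S C theta)%R.
Proof.
rewrite /FCP divr_ge0 //; apply: sumr_ge0 => i _; by case: ifP.
Qed.

Lemma fcp_bound (Ev : forall i, Theta i -> \bar R)
  (hnn : forall i th, 0 <= Ev i th) (S : {set 'I_K}) (w delta : R) :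
  (1 < w)%R -> (0 < delta)%R ->
  (FCP w delta S (CE Ev) theta)%:E <=
  (delta / K%:R)%:E * \sum_(i < K) Ev i (theta i).
Proof.
move=> w1 d0.
have Kge0 : 0 <= (delta / K%:R)%:E by rewrite lee_fin divr_ge0 // ltW.
have X0 : 0 <= \sum_(i in S) Ev i (theta i) by apply: sume_ge0 => i _; exact: hnn.
have Y0 : 0 <= \sum_(i in ~: S) Ev i (theta i) by apply: sume_ge0 => i _; exact: hnn.
have T0 : 0 <= \sum_(i < K) Ev i (theta i) by apply: sume_ge0 => i _; exact: hnn.
have [->|Sn0] := eqVneq S finset.set0.
  by rewrite /FCP big_set0 mul0r; apply: mule_ge0.
have S0 : (0 < #|S|)%N by rewrite card_gt0.
have K0 : (0 < K)%N.
  by apply: (leq_trans S0); rewrite -[X in (_ <= X)%N]card_ord max_card.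
have Tsplit : \sum_(i < K) Ev i (theta i) =
    \sum_(i in S) Ev i (theta i) + \sum_(i in ~: S) Ev i (theta i).
  rewrite (bigID (fun i => i \in S)) /=; congr (_ + _).
  by apply: eq_bigl => i; rewrite finset.in_setC.
have key : forall c : R, (0 < c)%R ->
  ((\sum_(i in S) (if `[< ~ CE Ev (c * #|S|%:R / K%:R) (theta i) >] then 1 else 0))
     / (maxn #|S| 1)%:R)%:E <= (c / K%:R)%:E * \sum_(i in S) Ev i (theta i).
  move=> c c0.
  rewrite (maxn_idPl S0) mulr_suml -sumEFin ge0_sume_distrr; last first.
    by move=> i _; exact: hnn.
  apply: lee_sum => i _.
  case: asboolP => [hC|_]; last first.
    by rewrite mul0r; apply: mule_ge0; [rewrite lee_fin divr_ge0 // ltW|exact: hnn].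
  have a0 : (0 < c * #|S|%:R / K%:R)%R by rewrite !mulr_gt0 // ?invr_gt0 ltr0n.
  move: hC; rewrite /CE /= inv_lev_pos // => /negP; rewrite -leNgt => hle.
  have hck : 0 <= (c / K%:R)%:E by rewrite lee_fin divr_ge0 // ltW.
  apply: (le_trans _ (lee_wpmul2l hck hle)).
  rewrite -EFinM lee_fin le_eqVlt; apply/orP; left; apply/eqP.
  have cn0 : c != 0%R by rewrite gt_eqF.
  have Kn0 : (K%:R : R) != 0%R by rewrite pnatr_eq0 -lt0n.
  have Sn0' : (#|S|%:R : R) != 0%R by rewrite pnatr_eq0 -lt0n.
  field; by rewrite Sn0' Kn0 cn0.
rewrite /FCP /Phi; case: asboolP => hS.
  have wd0 : (0 < w * delta)%R by rewrite mulr_gt0 // (lt_trans _ w1).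
  apply: (le_trans (key (w * delta)%R wd0)).
  rewrite Tsplit (_ : (w * delta / K%:R)%R = (delta / K%:R) * w)%R; last by ring.
  rewrite EFinM -muleA; apply: lee_wpmul2l => //; exact: sigma_ineq.
apply: (le_trans (key delta d0)).
by rewrite Tsplit; apply: lee_wpmul2l => //; exact: leeDl.
Qed.

End Aux.

Lemma le_integral_nm (d : measure_display) (T : measurableType d) (R : realType)
  (mu : {measure set T -> \bar R}) (f g : T -> \bar R) :
  (forall x, (0 <= f x)%E) -> (forall x, (f x <= g x)%E) ->
  (\int[mu]_x f x <= \int[mu]_x g x)%E.
Proof.
move=> f0 fg.
have g0 x : (0 <= g x)%E by exact: le_trans (f0 x) (fg x).
rewrite !ge0_integralTE //; apply: ereal_sup_le => _ [h hf <-].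
by exists h => // x; exact: le_trans (hf x) (fg x).
Qed.

Theorem proposition5 (R : realType) (d : measure_display) (Omega : measurableType d)
  (P : probability Omega R) (K : nat) (Theta : 'I_K -> Type)
  (w delta : R) (hw : 1 < w) (hdelta0 : 0 < delta) (hdelta1 : delta < 1)
  (* the probability space carries a standard uniform random variable *)
  (hU : exists U : Omega -> R, measurable_fun setT U /\
          forall x : R, 0 <= x <= 1 -> P [set om | U om <= x] = x%:E)
  (* random selection *)
  (Sel : Omega -> {set 'I_K})
  (hSel : forall A : {set 'I_K}, measurable (Sel @^-1` [set A]))
  (* e-value families and the true parameter *)
  (E : forall i : 'I_K, Theta i -> Omega -> \bar R)
  (theta : forall i : 'I_K, Theta i)
  (hEnn : forall i (th : Theta i) om, (0 <= E i th om)%E)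
  (hEmeas : forall i, measurable_fun [set: Omega] (E i (theta i) : Omega -> \bar R))
  (hEexp : forall i, (\int[P]_om E i (theta i) om <= 1)%E) :
  (\int[P]_om (FCP w delta (Sel om) (CE (fun i th => E i th om)) theta)%:E
     <= delta%:E)%E.

Proof.
have hF0 om : (0 <= \sum_(i < K) E i (theta i) om)%E.
  by apply: sume_ge0 => i _; exact: hEnn.
apply: (le_trans (@le_integral_nm _ _ _ P (fun om =>
   (FCP w delta (Sel om) (CE (fun i th => E i th om)) theta)%:E)
   (fun om => ((delta / K%:R)%:E * \sum_(i < K) E i (theta i) om)%E) _ _)).
- by move=> *; rewrite lee_fin; exact: FCP_ge0.
- move=> om.
  exact: (@fcp_bound _ _ _ theta (fun i th => E i th om) (fun i th => hEnn i th om)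
            (Sel om) w delta hw hdelta0).
rewrite ge0_integralZl_EFin //; last 2 first.
- by apply: emeasurable_sum => i; exact: hEmeas.
- by rewrite divr_ge0 // ltW.
rewrite ge0_integral_sum //.
have hsum : (\sum_(i < K) (\int[P]_om E i (theta i) om) <= (K%:R)%:E)%E.
  apply: (le_trans (lee_sum _ (fun i _ => hEexp i))).
  by rewrite sumEFin sumr_const card_ord.
have hK : (0 <= (delta / K%:R)%:E)%E by rewrite lee_fin divr_ge0 // ltW.
apply: (le_trans (lee_wpmul2l hK hsum)).
rewrite -EFinM lee_fin.
have [K0|Kn0] := eqVneq K 0%N.
  by rewrite K0 mulr0 ltW.
by rewrite divfK // pnatr_eq0.
Qed.
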